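(* Let $(\Sigma(t),\beta(t))$ be a solution of Hamilton's equations $\frac{d}{dt}(\Sigma,\beta_\Sigma)=X_h(\Sigma,\beta_\Sigma)$ starting at a point of $\mathcal{R}_{1,0}$, and let $\Gamma(t)$ be the closed plane curve whose rotation about the vertical axis gives $\Sigma(t)$. Let $f(t,\rho)=(\xi(t,\rho),\eta(t,\rho))$ be the parametrization of $\Gamma(t)$ moving normally, $f_t=k_g\,n_\Gamma\circ f$ with $n_\Gamma$ the unit normal of $\Gamma$. Then $$\xi_t=\frac{\xi_\rho\eta_\rho}{\xi(\xi_\rho^2+\eta_\rho^2)},\qquad \eta_t=-\frac{\xi_\rho^2}{\xi(\xi_\rho^2+\eta_\rho^2)},$$ and the vorticity density $\beta(t)=\zeta_\rho d\rho$ evolves by $$\zeta_t=-\frac{\eta_\rho\zeta_\rho}{\xi(\xi_\rho^2+\eta_\rho^2)}.$$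
   Context: Setting: $\mu$ Euclidean volume form on $\mathbb{R}^3$, $d\nu=\mu$, $a>0$; $S$ compact oriented surface with closed nowhere-vanishing 1-form $\beta$ with period group $\ell\mathbb{Z}$; $\mathrm{Gr}_a^{S,\beta}$ the set of pairs $(\Sigma,\beta_\Sigma)$ ($\Sigma\subset\mathbb{R}^3$ oriented embedded surface, $\int_\Sigma\nu=a$, orientation-preserving $\Psi:S\to\Sigma$ with $\Psi^*\beta_\Sigma=\beta$). Vortex lines are fibers of $b_\Sigma:\Sigma\to\mathbb{R}/\ell\mathbb{Z}$ with $\beta_\Sigma=b_\Sigma^*\vartheta_\ell$. Darboux frame $\{T,n_g,n\}$ of vortex lines: $n$ unit normal of $\Sigma$ compatible with orientations, $T$ unit tangent, $n_g=n\times T$, oriented so $\beta_\Sigma(n_g)>0$; $kN=k_gn_g+k_nn$ is the curvature vector of a vortex line. Tangent vectors at $(\Sigma,\beta_\Sigma)$ are pairs (normal velocity $\rho\in C^\infty(\Sigma)$ with $\int\rho\,\mu_\Sigma=0$, $\mu_\Sigma=i_n\mu$; exact variation $d\lambda$ of $\beta_\Sigma$), and the Hamiltonian vector field of $h=\int_{\mathbb{T}_\ell}\mathrm{length}(C_z)\vartheta_\ell$ is $X_h=(k_g,-d(k_n\beta_\Sigma(n_g)))$. $\mathcal{R}_{1,0}$ consists of the $(\Sigma,\beta_\Sigma)$ where $\Sigma$ is the surface of revolution $(\xi(\rho)\cos\theta,\xi(\rho)\sin\theta,\eta(\rho))$, $\xi>0$, $\rho,\theta\in\mathbb{R}/2\pi\mathbb{Z}$,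 obtained by rotating the closed plane curve $\Gamma=(\xi,\eta)$ about the vertical axis, oriented so that $n=(\xi_\rho^2+\eta_\rho^2)^{-1/2}(-\eta_\rho\cos\theta,-\eta_\rho\sin\theta,\xi_\rho)$, and $\beta_\Sigma=\zeta_\rho d\rho$ with $\zeta_\rho>0$ and $\zeta(\rho+2\pi)=\zeta(\rho)+\ell$ (vortex lines are the parallel circles). Then $k_g=-\xi_\rho/(\xi\sqrt{\xi_\rho^2+\eta_\rho^2})$, $k_n=\eta_\rho/(\xi\sqrt{\xi_\rho^2+\eta_\rho^2})$. *)

(* Defs.v *)
From Stdlib Require Import Reals ZArith.
From Coquelicot Require Import Coquelicot.
Open Scope R_scope.

Definition dt (F : R -> R -> R) (t r : R) : R := Derive (fun s => F s r) t.
Definition drho (F : R -> R -> R) (t r : R) : R := Derive (fun s => F t s) r.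

Fixpoint Ck (k : nat) (F : R -> R -> R) : Prop :=
  match k with
  | O => forall p : R * R, continuous (fun q : R * R => F (fst q) (snd q)) p
  | S k' =>
      (forall t r, ex_derive (fun s => F s r) t /\ ex_derive (fun s => F t s) r)
      /\ Ck k' F /\ Ck k' (dt F) /\ Ck k' (drho F)
  end.

Definition smooth2 (F : R -> R -> R) : Prop := forall k, Ck k F.

Definition speed (xi eta : R -> R -> R) (t r : R) : R :=
  sqrt (drho xi t r ^ 2 + drho eta t r ^ 2).

(** Unit normal n_Gamma of Gamma, compatible with the normal
    n = |f_rho|^{-1} (-eta_rho cos th, -eta_rho sin th, xi_rho) of Sigma. *)
Definition nGamma (xi eta : R -> R -> R) (t r : R) : R * R :=
  (- drho eta t r / speed xi eta t r, drho xi t r / speed xi eta t r).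

(** Geodesic and normal curvature of the vortex lines (parallel circles). *)
Definition kg (xi eta : R -> R -> R) (t r : R) : R :=
  - drho xi t r / (xi t r * speed xi eta t r).
Definition kn (xi eta : R -> R -> R) (t r : R) : R :=
  drho eta t r / (xi t r * speed xi eta t r).

(** beta_Sigma(n_g) for beta_Sigma = zeta_rho d rho: n_g is the unit vector
    d_rho F / |d_rho F| (tangent to meridians, orthogonal to the parallels,
    oriented so that beta(n_g) > 0), and |d_rho F| = |f_rho|. *)
Definition beta_ng (xi eta zeta : R -> R -> R) (t r : R) : R :=
  drho zeta t r / speed xi eta t r.

(* Main.v *)
Require Import Defs.
From Stdlib Require Import Reals ZArith Lra.
From Coquelicot Require Import Coquelicot.
Open Scope R_scope.

Lemma alg1 (x a b c d : R) : 0 < x -> 0 < a^2 + b^2 ->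
  (c / (x * sqrt (a^2+b^2))) * (d / sqrt (a^2+b^2)) = c * d / (x * (a^2+b^2)).
Proof.
  intros Hx HS.
  assert (Hq : sqrt (a^2+b^2) * sqrt (a^2+b^2) = a^2+b^2) by (apply sqrt_sqrt; lra).
  assert (Hp : 0 < sqrt (a^2+b^2)) by (apply sqrt_lt_R0; lra).
  revert Hq Hp. generalize (sqrt (a^2+b^2)). intros q Hq Hp.
  rewrite <- Hq. field. split; lra.
Qed.

Lemma exd_G (a b c e : R -> R) x :
  ex_derive a x -> ex_derive b x -> ex_derive c x -> ex_derive e x ->
  0 < c x -> 0 < a x ^ 2 + b x ^ 2 ->
  ex_derive (fun q => b q * e q / (c q * (a q ^ 2 + b q ^ 2))) x.
Proof.
  intros Ha Hb Hc He Hcx HS.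
  apply (ex_derive_div (fun q => b q * e q) (fun q => c q * (a q ^ 2 + b q ^ 2))).
  - apply ex_derive_mult; assumption.
  - apply ex_derive_mult; [assumption|].
    apply (ex_derive_plus (fun q => a q ^ 2) (fun q => b q ^ 2));
      apply ex_derive_pow; assumption.
  - apply Rgt_not_eq. apply Rmult_lt_0_compat; assumption.
Qed.

Lemma smooth_facts F : smooth2 F -> forall t r,
  ex_derive (fun s => F s r) t /\ ex_derive (fun s => F t s) r /\
  ex_derive (fun s => drho F s r) t /\ ex_derive (fun s => drho F t s) r /\
  ex_derive (fun s => dt F s r) t /\ ex_derive (fun s => dt F t s) r.
Proof.
  intros H t r. destruct (H 2%nat) as [H1 [_ [H2 H3]]].
  destruct H2 as [H2 _]. destruct H3 as [H3 _].
  destruct (H1 t r). destruct (H2 t r). destruct (H3 t r). tauto.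
Qed.

Definition G (xi eta zeta : R -> R -> R) t r :=
  drho eta t r * drho zeta t r / (xi t r * (drho xi t r ^ 2 + drho eta t r ^ 2)).

Theorem theorem3p10 (l : R) (xi eta zeta : R -> R -> R) :
  0 < l ->
  smooth2 xi -> smooth2 eta -> smooth2 zeta ->
  (forall t r, 0 < xi t r) ->
  (forall t r, xi t (r + 2 * PI) = xi t r /\ eta t (r + 2 * PI) = eta t r) ->
  (forall t r1 r2, xi t r1 = xi t r2 -> eta t r1 = eta t r2 ->
      exists k : Z, r2 = r1 + 2 * PI * IZR k) ->
  (forall t r, 0 < drho xi t r ^ 2 + drho eta t r ^ 2) ->
  (forall t r, 0 < drho zeta t r) ->
  (forall t r, zeta t (r + 2 * PI) = zeta t r + l) ->
  (forall t r, dt xi t r = kg xi eta t r * fst (nGamma xi eta t r) /\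
               dt eta t r = kg xi eta t r * snd (nGamma xi eta t r)) ->
  (forall t r, dt (drho zeta) t r =
               - drho (fun s q => kn xi eta s q * beta_ng xi eta zeta s q) t r) ->
  (forall t r,
      dt xi t r = drho xi t r * drho eta t r /
                  (xi t r * (drho xi t r ^ 2 + drho eta t r ^ 2)) /\
      dt eta t r = - (drho xi t r ^ 2) /
                  (xi t r * (drho xi t r ^ 2 + drho eta t r ^ 2)))
  /\
  (exists zeta' : R -> R -> R,
      forall t r,
        ex_derive (fun s => zeta' s r) t /\ ex_derive (fun s => zeta' t s) r /\
        drho zeta' t r = drho zeta t r /\
        dt zeta' t r = - (drho eta t r * drho zeta t r) /
                       (xi t r * (drho xi t r ^ 2 + drho eta t r ^ 2))).
Proof.
  intros Hl Sxi Seta Szeta Hxi _ _ HS _ _ Hmove Hbeta.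
  split.
  { intros t r. destruct (Hmove t r) as [E1 E2]. rewrite E1, E2.
    unfold kg, nGamma, speed; cbv [fst snd]. split.
    - replace (- drho xi t r / (xi t r * sqrt (drho xi t r ^ 2 + drho eta t r ^ 2)) *
        (- drho eta t r / sqrt (drho xi t r ^ 2 + drho eta t r ^ 2))) with
        ((drho xi t r) / (xi t r * sqrt (drho xi t r ^ 2 + drho eta t r ^ 2)) *
        (drho eta t r / sqrt (drho xi t r ^ 2 + drho eta t r ^ 2))) by (unfold Rdiv; ring).
      apply alg1; auto.
    - replace (- drho xi t r / (xi t r * sqrt (drho xi t r ^ 2 + drho eta t r ^ 2)) *
        (drho xi t r / sqrt (drho xi t r ^ 2 + drho eta t r ^ 2))) with
        (- (drho xi t r / (xi t r * sqrt (drho xi t r ^ 2 + drho eta t r ^ 2)) *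
        (drho xi t r / sqrt (drho xi t r ^ 2 + drho eta t r ^ 2)))) by (unfold Rdiv; ring).
      rewrite alg1; auto. unfold Rdiv. ring. }
  assert (GexT : forall t r, ex_derive (fun s => G xi eta zeta s r) t).
  { intros t r. unfold G.
    destruct (smooth_facts _ Sxi t r) as [? [? [? [? _]]]].
    destruct (smooth_facts _ Seta t r) as [? [? [? [? _]]]].
    destruct (smooth_facts _ Szeta t r) as [? [? [? [? _]]]].
    apply (exd_G (fun s => drho xi s r) (fun s => drho eta s r) (fun s => xi s r)
             (fun s => drho zeta s r)); auto. }
  assert (GexR : forall t r, ex_derive (fun s => G xi eta zeta t s) r).
  { intros t r. unfold G.
    destruct (smooth_facts _ Sxi t r) as [? [? [? [? _]]]].
    destruct (smooth_facts _ Seta t r) as [? [? [? [? _]]]].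
    destruct (smooth_facts _ Szeta t r) as [? [? [? [? _]]]].
    apply (exd_G (fun s => drho xi t s) (fun s => drho eta t s) (fun s => xi t s)
             (fun s => drho zeta t s)); auto. }
  assert (KG : forall t r, kn xi eta t r * beta_ng xi eta zeta t r = G xi eta zeta t r).
  { intros t r. unfold kn, beta_ng, speed, G. apply alg1; auto. }
  assert (Sch : forall t r, dt (drho zeta) t r = drho (dt zeta) t r).
  { intros t r. unfold dt, drho.
    apply (Schwarz zeta t r).
    - exists (mkposreal 1 Rlt_0_1). intros u v _ _.
      destruct (smooth_facts _ Szeta u v) as [? [? [? [? [? ?]]]]]. tauto.
    - apply continuity_2d_pt_filterlim.
      pose proof (Szeta 2%nat) as C0. cbn [Ck] in C0.
      destruct C0 as [_ [_ [_ [_ [_ [C _]]]]]].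
      exact (C (t, r)).
    - apply continuity_2d_pt_filterlim.
      pose proof (Szeta 2%nat) as C0. cbn [Ck] in C0.
      destruct C0 as [_ [_ [[_ [_ [_ C]]] _]]].
      exact (C (t, r)). }
  assert (Const : forall t r, dt zeta t r + G xi eta zeta t r = dt zeta t 0 + G xi eta zeta t 0).
  { intros t.
    assert (D : forall x, is_derive (fun q => dt zeta t q + G xi eta zeta t q) x 0).
    { intros x.
      destruct (smooth_facts _ Szeta t x) as [_ [_ [_ [_ [_ Hz]]]]].
      replace 0 with (drho (dt zeta) t x + Derive (fun q => G xi eta zeta t q) x).
      - apply (is_derive_plus (fun q => dt zeta t q) (fun q => G xi eta zeta t q));
          apply Derive_correct; auto.
      - rewrite <- Sch, Hbeta. unfold drho.
        rewrite (Derive_ext (fun q => G xi eta zeta t q)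
                  (fun q => kn xi eta t q * beta_ng xi eta zeta t q)).
        + ring.
        + intros; symmetry; apply KG. }
    intros r. destruct (Rtotal_order r 0) as [Hr | [Hr | Hr]].
    - apply (eq_is_derive (fun q => dt zeta t q + G xi eta zeta t q)); auto.
    - subst; reflexivity.
    - symmetry. apply (eq_is_derive (fun q => dt zeta t q + G xi eta zeta t q)); auto. }
  set (g := fun s => - G xi eta zeta s 0).
  assert (gc : forall s, continuous g s).
  { intros s. apply (@ex_derive_continuous R_AbsRing R_NormedModule g s). unfold g.
    apply (ex_derive_opp (fun s => G xi eta zeta s 0)). auto. }
  assert (Ider : forall t, is_derive (RInt g 0) t (g t)).
  { intros t. apply (is_derive_RInt g (RInt g 0) 0 t); auto.
    apply filter_forall. intros b. apply (@RInt_correct R_CompleteNormedModule). apply (@ex_RInt_continuous R_CompleteNormedModule).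
    intros; auto. }
  exists (fun s q => zeta s q - zeta s 0 + RInt g 0 s).
  intros t r.
  destruct (smooth_facts _ Szeta t r) as [Z1 [Z2 _]].
  destruct (smooth_facts _ Szeta t 0) as [Z3 _].
  assert (DT : is_derive (fun s => zeta s r - zeta s 0 + RInt g 0 s) t
                 (dt zeta t r - dt zeta t 0 + g t)).
  { apply (is_derive_plus (fun s => zeta s r - zeta s 0) (RInt g 0)); auto.
    apply (is_derive_minus (fun s => zeta s r) (fun s => zeta s 0));
      apply Derive_correct; auto. }
  assert (DR : is_derive (fun s => zeta t s - zeta t 0 + RInt g 0 t) r (drho zeta t r)).
  { replace (drho zeta t r) with (drho zeta t r - 0 + 0) by ring.
    apply (is_derive_plus (fun s => zeta t s - zeta t 0) (fun _ => RInt g 0 t)).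
    - apply (is_derive_minus (fun s => zeta t s) (fun _ => zeta t 0)).
      + apply Derive_correct; auto.
      + apply (@is_derive_const R_AbsRing R_NormedModule).
    - apply (@is_derive_const R_AbsRing R_NormedModule). }
  split; [eexists; exact DT|]. split; [eexists; exact DR|]. split.
  - unfold drho at 1. apply is_derive_unique. exact DR.
  - unfold dt at 1. cbv beta.
    assert (E : Derive (fun s : R => zeta s r - zeta s 0 + RInt g 0 s) t
                = dt zeta t r - dt zeta t 0 + g t) by (apply is_derive_unique; exact DT).
    rewrite E.
    unfold g. rewrite Ropp_div. fold (G xi eta zeta t r).
    generalize (Const t r). lra.
Qed.
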